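(* Let $\mathbb T=\mathbb R/\mathbb Z$, $T$ a torus (written additively), $L^2T$ the group of smooth maps $\mathbb T^2\to T$ under pointwise addition, and let $SL_2(\mathbb Z)$ act on $\mathbb T^2=\mathbb R^2/\mathbb Z^2$ by left multiplication. Let $\mathcal G$ be the group with underlying set $SL_2(\mathbb Z)\times\mathbb T^2\times L^2T$ and product \[ (A',t',\gamma'(s))(A,t,\gamma(s))=(A'A,\ A^{-1}t'+t,\ \gamma'(As+t)+\gamma(s)). \] Let $\mathbb T^2\times T\subset\mathcal G$ be the subgroup of elements $(1,r,c_u)$ with $c_u$ the constant loop at $u\in T$, and let $SL_2(\mathbb Z)\ltimes\check T^2\subset\mathcal G$ be the subgroup of elements $(A,0,\gamma)$ with $\gamma\in\mathrm{Hom}(\mathbb T^2,T)\cong\check T^2$ (where $(m_1,m_2)\in\check T^2$ corresponds to $s\mapsto m_1(s_1)+m_2(s_2)$). Then $SL_2(\mathbb Z)\ltimes\check T^2$ is contained in the normaliser $N$ of $\mathbb T^2\times T$ in $\mathcal G$, and the composite $SL_2(\mathbb Z)\ltimes\check T^2\hookrightarrow N\twoheadrightarrow N/(\mathbb T^2\times T)$ is an isomorphism.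
   Context: $\check T=\mathrm{Hom}(\mathbb T,T)$ is the cocharacter lattice of $T$. *)

(* Defs.v *)
From HB Require Import structures.
From mathcomp Require Import all_boot all_order all_algebra.
From mathcomp Require Import all_classical all_reals all_analysis.
From mathcomp Require Import lra.
Set Implicit Arguments. Unset Strict Implicit. Unset Printing Implicit Defensive.
Import Order.TTheory GRing.Theory Num.Theory.
Import numFieldNormedType.Exports.
Local Open Scope ring_scope.

Section Defs.
Variable R : realType.

(** The circle 𝕋 = ℝ/ℤ, represented by the canonical representatives in [0,1). *)
Definition circ := {x : R | 0 <= x < 1}.

Definition fracR (x : R) : R := x - (Num.floor x)%:~R.

Lemma fracR_itv (x : R) : 0 <= fracR x < 1.
Proof.
rewrite /fracR; have /andP[h1 h2] := floor_itv x.
rewrite intrD in h2; apply/andP; split; lra.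
Qed.

Definition piC (x : R) : circ := exist _ (fracR x) (fracR_itv x).

Definition cadd (x y : circ) : circ := piC (sval x + sval y).
Definition czero : circ := piC 0.

Definition tor (k : nat) := 'I_k -> circ.
Definition tadd k (x y : tor k) : tor k := fun i => cadd (x i) (y i).
Definition tzero k : tor k := fun _ => czero.
Definition piT k (v : 'rV[R]_k) : tor k := fun i => piC (v 0 i).

Definition actT (A : 'M[int]_2) (s : tor 2) : tor 2 :=
  fun i => piC (\sum_(j < 2) (A i j)%:~R * sval (s j)).

Fixpoint iterD (m k : nat) (vs : seq 'rV[R]_m) (F : 'rV[R]_m -> 'rV[R]_k)
  : 'rV[R]_m -> 'rV[R]_k :=
  match vs with
  | [::] => F
  | v :: vs' => fun x => derive (iterD vs' F) x v
  end.

Definition smoothR (m k : nat) (F : 'rV[R]_m -> 'rV[R]_k) : Prop :=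
  forall vs : seq 'rV[R]_m,
    continuous (iterD vs F) /\ forall x v, derivable (iterD vs F) x v.

Definition smoothT (n : nat) (g : tor 2 -> tor n) : Prop :=
  exists F : 'rV[R]_2 -> 'rV[R]_n, smoothR F /\ forall x, g (piT x) = piT (F x).

(** Carrier of the group 𝒢 = SL_2(ℤ) × 𝕋^2 × L^2 T, with T = 𝕋^n. *)
Definition Gcar (n : nat) := ('M[int]_2 * tor 2 * (tor 2 -> tor n))%type.

Definition inG n (g : Gcar n) : Prop :=
  \det g.1.1 = 1 /\ smoothT g.2.

Definition Gmul n (g' g : Gcar n) : Gcar n :=
  let: (A', t', c') := g' in
  let: (A, t, c) := g in
  (A' *m A, tadd (actT (invmx A) t') t,
   fun s => tadd (c' (tadd (actT A s) t)) (c s)).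

Definition inH n (g : Gcar n) : Prop :=
  exists (r : tor 2) (u : tor n), g = (1%:M, r, fun _ => u).

Definition inK n (g : Gcar n) : Prop :=
  inG g /\ g.1.2 = @tzero 2 /\
  forall s s', g.2 (tadd s s') = tadd (g.2 s) (g.2 s').

Definition inN n (g : Gcar n) : Prop :=
  inG g /\
  (forall h, inH h -> exists h', inH h' /\ Gmul g h = Gmul h' g) /\
  (forall h', inH h' -> exists h, inH h /\ Gmul g h = Gmul h' g).

End Defs.

(* Main.v *)
From Pilot Require Import Defs.
From HB Require Import structures.
From mathcomp Require Import all_boot all_order all_algebra.
From mathcomp Require Import all_classical all_reals all_analysis.
From mathcomp Require Import ring lra.
Import Order.TTheory GRing.Theory Num.Theory.
Import numFieldNormedType.Exports.
Local Open Scope ring_scope.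

Notation cad := Pilot.Defs.cadd.
Notation cz := Pilot.Defs.czero.

Section S.
Variable R : realType.

Lemma fracR_addz (x : R) (m : int) : fracR (x + m%:~R) = fracR x.
Proof. by rewrite /fracR floorDrz ?intr_int // intrKfloor intrD; ring. Qed.

Lemma piC_eq (x y : R) (m : int) : x = y + m%:~R -> piC x = piC y.
Proof. by move=> ->; apply: val_inj => /=; rewrite fracR_addz. Qed.

Lemma fracR_id (x : R) : 0 <= x < 1 -> fracR x = x.
Proof.
move=> hx; rewrite /fracR (@floor_def _ x 0); first by rewrite subr0.
by rewrite add0r.
Qed.

Lemma piC_sval (c : circ R) : piC (sval c) = c.
Proof. by case: c => x hx; apply: val_inj => /=; rewrite fracR_id. Qed.

Lemma cadd_piC (a b : R) : cad (piC a) (piC b) = piC (a + b).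
Proof.
apply: (@piC_eq _ _ (- (Num.floor a + Num.floor b))) => /=.
by rewrite /fracR intrN intrD; ring.
Qed.

Definition cneg (x : circ R) : circ R := piC (- sval x).

Lemma cneg_piC (a : R) : cneg (piC a) = piC (- a).
Proof.
apply: (@piC_eq _ _ (Num.floor a)) => /=.
by rewrite /fracR; ring.
Qed.

Lemma circ_addA : associative (@cad R).
Proof.
move=> a b c; rewrite -(piC_sval a) -(piC_sval b) -(piC_sval c) !cadd_piC.
by rewrite addrA.
Qed.
Lemma circ_addC : commutative (@cad R).
Proof. by move=> a b; rewrite -(piC_sval a) -(piC_sval b) !cadd_piC addrC. Qed.
Lemma circ_add0 : left_id (@cz R) (@cad R).
Proof. by move=> a; rewrite -(piC_sval a) /cz cadd_piC add0r. Qed.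
Lemma circ_addN : left_inverse (@cz R) cneg (@cad R).
Proof. by move=> a; rewrite -(piC_sval a) cneg_piC cadd_piC addNr. Qed.
End S.

HB.instance Definition _ (R : realType) := Choice.copy (circ R) {x : R | 0 <= x < 1}.
HB.instance Definition _ (R : realType) :=
  GRing.isZmodule.Build (circ R) (@circ_addA R) (@circ_addC R) (@circ_add0 R) (@circ_addN R).

Section T.
Variable R : realType.
Lemma taddE k (x y : tor R k) : tadd x y = (x + y : 'I_k -> circ R).
Proof. by []. Qed.
Lemma tzeroE k : @tzero R k = (0 : 'I_k -> circ R).
Proof. by []. Qed.
End T.
Section A.
Variable R : realType.
Lemma actT_comp (B A : 'M[int]_2) (s : tor R 2) : actT B (actT A s) = actT (B *m A) s.
Proof.
apply: funext => i; rewrite /actT /=.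
rewrite !big_ord_recr !big_ord0 /= !mxE !big_ord_recr !big_ord0 /= !add0r.
set y0 := (_ + _ * sval (s _)).
set y1 := (_ + _ * sval (s _)).
set i0 := widen_ord _ _.
apply: (@piC_eq _ _ _ (- (B i i0 * Num.floor y0 + B i ord_max * Num.floor y1))).
rewrite /fracR /y0 /y1 !(intrD, intrM, intrN); ring.
Qed.

Lemma actT1 (s : tor R 2) : actT 1%:M s = s.
Proof.
apply: funext => i; rewrite /actT /=.
rewrite !big_ord_recr !big_ord0 /= !mxE add0r.
rewrite -[RHS]piC_sval; congr piC.
case: i => [[|[|//]] hi] /=.
  by rewrite mul1r mul0r addr0; congr (sval (s _)); exact: val_inj.
by rewrite mul1r mul0r add0r; congr (sval (s _)); exact: val_inj.
Qed.

Lemma actT0 (A : 'M[int]_2) : actT A (@tzero R 2) = @tzero R 2.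
Proof.
apply: funext => i; rewrite /actT /tzero /cz /=.
rewrite !big_ord_recr !big_ord0 /= /fracR floor0 subr0 !mulr0 !addr0.
by [].
Qed.

Lemma invK (A : 'M[int]_2) (s : tor R 2) : \det A = 1 -> actT (invmx A) (actT A s) = s.
Proof.
move=> hA; rewrite actT_comp mulVmx ?actT1 // unitmxE hA unitr1 //.
Qed.
End A.
Section A.
Variable R : realType.
Variables (m k : nat).
Implicit Types (F : 'rV[R]_m -> 'rV[R]_k) (w : 'rV[R]_k).

Lemma derive_addc F w a v : derive (fun x => F x + w) a v = derive F a v.
Proof.
rewrite /derive.
have -> : (fun h : R => h^-1 *: (((fun x => F x + w) \o shift a) (h *: v) - (F a + w))) =
  (fun h => h^-1 *: ((F \o shift a) (h *: v) - F a)).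
  by apply: funext => h /=; rewrite opprD addrACA subrr addr0.
by [].
Qed.

Lemma derivable_addc F w a v : derivable (fun x => F x + w) a v = derivable F a v.
Proof.
rewrite /derivable.
have -> : (fun h : R => h^-1 *: (((fun x => F x + w) \o shift a) (h *: v) - (F a + w))) =
  (fun h => h^-1 *: ((F \o shift a) (h *: v) - F a)).
  by apply: funext => h /=; rewrite opprD addrACA subrr addr0.
by [].
Qed.

Lemma iterD_addc F w v vs : Pilot.Defs.iterD (v :: vs) (fun x => F x + w) = Pilot.Defs.iterD (v :: vs) F.
Proof.
elim: vs v => [|v' vs IH] v /=; apply: funext => x.
  exact: derive_addc.
change (derive (Pilot.Defs.iterD (v' :: vs) (fun x => F x + w)) x v = derive (Pilot.Defs.iterD (v' :: vs) F) x v). by rewrite IH.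
Qed.

Lemma smooth_addc F w : smoothR F -> smoothR (fun x => F x + w).
Proof.
move=> hF [|v vs].
  have [cF dF] := hF [::]; split => /=.
    move=> x; apply: continuousD; [exact: cF | exact: cst_continuous].
  by move=> x v; rewrite derivable_addc; exact: dF.
by rewrite iterD_addc; exact: hF.
Qed.
End A.
Section A.
Variable R : realType.
Lemma smoothT_addc n (g : tor R 2 -> tor R n) (c : tor R n) :
  smoothT g -> smoothT (fun s => tadd (g s) c).
Proof.
case=> F [sF hF]; exists (fun x => F x + \row_i sval (c i)); split.
  exact: smooth_addc.
move=> x; rewrite hF; apply: funext => i.
rewrite /tadd /piT -[c i]piC_sval cadd_piC !mxE //.
Qed.
End A.

Section M.
Variable R : realType.
Lemma hom0 n (f : tor R 2 -> tor R n) :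
  (forall s s', f (tadd s s') = tadd (f s) (f s')) -> f (@tzero R 2) = @tzero R n.
Proof.
move=> H; have e := H (@tzero R 2) (@tzero R 2).
rewrite !taddE !tzeroE add0r in e; rewrite !tzeroE.
apply: (@addrI _ (f 0)); by rewrite addr0 -e.
Qed.
End M.

Theorem mainTheorem9 (R : realType) (n : nat) :
  (* SL_2(ℤ) ⋉ Ť^2 ⊆ N *)
  (forall k : Gcar R n, inK k -> inN k) /\
  (* the composite K ↪ N ↠ N/(𝕋^2×T) is injective: kH = k'H ⇒ k = k' *)
  (forall k k' h : Gcar R n, inK k -> inK k' -> inH h ->
     k = Gmul k' h -> k = k') /\
  (* ... and surjective: every coset gH, g ∈ N, is some kH *)
  (forall g : Gcar R n, inN g ->
     exists k h : Gcar R n, inK k /\ inH h /\ g = Gmul k h).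
Proof.
split; [|split].
- move=> [[A t] g] [[hdet hsm] [/= ht hadd]]; simpl in hdet, hsm, hadd; subst t.
  split; first by split.
  split.
  + move=> h [r [u ->]].
    exists (1%:M, actT A r, fun _ => tadd (g r) u); split; first by exists (actT A r), (tadd (g r) u).
    rewrite /Gmul; congr (_, _, _).
    * by rewrite mulmx1 mul1mx.
    * by rewrite actT0 invK // !taddE !tzeroE add0r addr0.
    * apply: funext => s; rewrite actT1 hadd !taddE.
      by rewrite -addrA addrC.
  + move=> h' [r' [u' ->]].
    pose r := actT (invmx A) r'.
    exists (1%:M, r, fun _ => (u' - g r : 'I_n -> circ R)); split; first by exists r, (u' - g r).
    rewrite /Gmul; congr (_, _, _).
    * by rewrite mulmx1 mul1mx.
    * by rewrite actT0 !taddE !tzeroE add0r addr0.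
    * apply: funext => s; rewrite actT1 hadd !taddE.
      by rewrite addrACA subrr addr0 addrC.
- move=> [[A t] g] [[A' t'] g'] h [_ [/= ht hadd]] [_ [/= ht' hadd']] [r [u ->]].
  subst t t'; rewrite /Gmul; case=> eA er eg.
  rewrite actT0 taddE tzeroE add0r in er; subst r.
  have eu : u = @tzero R n.
    have := congr1 (fun f => f (@tzero R 2)) eg => /=.
    rewrite actT1 !taddE !tzeroE add0r (@hom0 R _ _ hadd) (@hom0 R _ _ hadd') !tzeroE add0r.
    by move=> ->.
  subst u; rewrite eA mulmx1; congr (_, _, _).
  rewrite eg; apply: funext => s; by rewrite actT1 !taddE !tzeroE !addr0.
- move=> [[A t] g] [[hdet hsm] [H1 H2]]; simpl in hdet, hsm.
  have key : forall r s, g (tadd s r) = tadd (tadd (g r) (- g (@tzero R 2))) (g s).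
    move=> r s.
    have [h' [[r' [u' eh']] E]] := H1 (1%:M, r, fun _ => @tzero R n) (ex_intro _ r (ex_intro _ (@tzero R n) erefl)).
    subst h'; rewrite /Gmul in E; case: E => _ _ E.
    have E' := fun s => congr1 (fun f => f s) E; simpl in E'.
    have Es := E' s; have E0 := E' (@tzero R 2).
    rewrite actT1 !taddE !tzeroE addr0 in Es.
    rewrite actT1 !taddE !tzeroE addr0 add0r in E0.
    by rewrite !taddE Es E0 addrK.
  pose d := fun s => tadd (g s) (- g (@tzero R 2)).
  have hd : forall s s', d (tadd s s') = tadd (d s) (d s').
    by move=> s s'; rewrite /d key !taddE -addrA addrC.
  exists (A, @tzero R 2, d), (1%:M, t, fun _ => tadd (g (@tzero R 2)) (- d t)).
  split; [|split].
  + split; [split => //=; exact: smoothT_addc | split => //].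
  + by exists t, (tadd (g (@tzero R 2)) (- d t)).
  + rewrite /Gmul; congr (_, _, _).
    * by rewrite mulmx1.
    * by rewrite actT0 !taddE !tzeroE add0r.
    * apply: funext => s; rewrite actT1 hd !taddE.
      rewrite addrACA subrr addr0 /d taddE.
      by rewrite subrK.
Qed.
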